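(* Let $U$ be a finite set and $\{X_u\}_{u\in U}$ finite non-empty sets; write $X_V=\prod_{u\in V}X_u$ for $V\subset U$. For every $V\subset U$ let $S_V\subset X_V$. Then for every integer $k\le|U|$, $$\Big|\mathbb E_{x\in X_U}\prod_{\substack{V\subset U\\|V|\le k}}S_V(x_V)-\prod_{\substack{V\subset U\\|V|\le k}}\mathbb E_{x_V\in X_V}S_V(x_V)\Big|\le 2^{|U|}\max_{\substack{V\subset U\\|V|\le k}}\Big\|S_V-\mathbb E_{x_V\in X_V}S_V\Big\|_{\Box^V(X_V)} .$$
   Context: Sets are identified with their indicator functions; $\mathbb E_{x\in X}$ is the uniform average over a finite set $X$. For $x=(x_u)_{u\in U}\in X_U$ and $V\subset U$, $x_V=(x_u)_{u\in V}$; for $V=\emptyset$, $X_\emptyset$ is a one-point set. For a finite index set $V$ and $f:X_V\to\mathbb C$ the Gowers box norm is $$\|f\|_{\Box^V(X_V)}^{2^{|V|}}=\mathbb E_{x^0,x^1\in X_V}\prod_{\omega\in\{0,1\}^V}\mathcal C^{|\omega|}f(x^{\omega}),$$ with $x^{\omega}=(x^{\omega_v}_v)_{v\in V}$, $|\omega|=\sum_v\omega_v$, $\mathcal C$ complex conjugation; when $V=\emptyset$ (so $f$ is a constant) $\|f\|_{\Box^\emptyset}=|f|$. *)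

(* Defs.v *)
From HB Require Import structures.
From mathcomp Require Import all_boot all_order all_algebra.
Set Implicit Arguments. Unset Strict Implicit. Unset Printing Implicit Defensive.
Import Order.TTheory GRing.Theory Num.Theory.
Local Open Scope ring_scope.

Definition subidx (U : finType) (V : {set U}) : finType := {u : U | u \in V}.

Definition XV (U : finType) (X : U -> finType) (V : {set U}) : finType :=
  {dffun forall i : subidx V, X (val i)}.

Definition XU (U : finType) (X : U -> finType) : finType :=
  {dffun forall u : U, X u}.

Definition restr (U : finType) (X : U -> finType) (V : {set U}) (x : XU X)
  : XV X V := [ffun i : subidx V => x (val i)].

Definition avg (C : numDomainType) (T : finType) (f : T -> C) : C :=
  (#|T|%:R)^-1 * \sum_(x : T) f x.

Definition xomega (U : finType) (X : U -> finType) (V : {set U})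
  (x0 x1 : XV X V) (w : {ffun subidx V -> bool}) : XV X V :=
  [ffun i : subidx V => if w i then x1 i else x0 i].

Definition boxpow (C : numClosedFieldType) (U : finType) (X : U -> finType)
  (V : {set U}) (f : XV X V -> C) : C :=
  avg (fun p : XV X V * XV X V =>
    \prod_(w : {ffun subidx V -> bool})
       iter #|[set i | w i]| (fun z : C => z^*) (f (xomega p.1 p.2 w))).

(* Gowers box norm; for V = emptyset (f constant) it is |f|. *)
Definition boxnorm (C : numClosedFieldType) (U : finType) (X : U -> finType)
  (V : {set U}) (f : XV X V -> C) : C :=
  if V == set0 then `|boxpow f| else (2 ^ #|V|)%N.-root (boxpow f).

(* Main.v *)
Require Import Defs.
From HB Require Import structures.
From mathcomp Require Import all_boot all_order all_algebra.
From mathcomp Require Import ring.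
Set Implicit Arguments. Unset Strict Implicit. Unset Printing Implicit Defensive.
Import Order.TTheory GRing.Theory Num.Theory.
Local Open Scope ring_scope.

Section AvgLemmas.
Variable C : numClosedFieldType.

Lemma avgE (T : finType) (f : T -> C) : avg f = (#|T|%:R)^-1 * \sum_x f x.
Proof. by []. Qed.

Lemma eq_avg (T : finType) (f g : T -> C) : (forall x, f x = g x) -> avg f = avg g.
Proof. by move=> e; rewrite !avgE; congr (_ * _); apply: eq_bigr. Qed.

Lemma avg_pair (T1 T2 : finType) (F : T1 -> T2 -> C) :
  avg (fun p : T1 * T2 => F p.1 p.2) = avg (fun x => avg (fun y => F x y)).
Proof.
rewrite !avgE card_prod natrM invfM -pair_bigA /= -mulrA; congr (_ * _).
by rewrite mulr_sumr; apply: eq_bigr => x _; rewrite avgE.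
Qed.

Lemma avg_swap (T1 T2 : finType) (F : T1 -> T2 -> C) :
  avg (fun x => avg (fun y => F x y)) = avg (fun y => avg (fun x => F x y)).
Proof.
rewrite !avgE (eq_bigr (fun x => #|T2|%:R^-1 * \sum_y F x y)); last by move=> x _; rewrite avgE.
rewrite [in RHS](eq_bigr (fun y => #|T1|%:R^-1 * \sum_x F x y)); last by move=> y _; rewrite avgE.
by rewrite -!mulr_sumr mulrCA exchange_big.
Qed.

Lemma avgMl (T : finType) (c : C) (f : T -> C) : c * avg f = avg (fun x => c * f x).
Proof. by rewrite !avgE mulrCA mulr_sumr. Qed.

Lemma avgD (T : finType) (f g : T -> C) : avg f + avg g = avg (fun x => f x + g x).
Proof. by rewrite !avgE -mulrDr big_split. Qed.

Lemma avg_le (T : finType) (f g : T -> C) : (forall x, f x <= g x) -> avg f <= avg g.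
Proof.
move=> h; rewrite !avgE; apply: ler_wpM2l; first by rewrite invr_ge0 ler0n.
by apply: ler_sum => x _.
Qed.

Lemma avg_ge0 (T : finType) (f : T -> C) : (forall x, 0 <= f x) -> 0 <= avg f.
Proof.
move=> h; rewrite avgE mulr_ge0 //; first by rewrite invr_ge0 ler0n.
by apply: sumr_ge0.
Qed.

Lemma norm_avg (T : finType) (f : T -> C) : `|avg f| <= avg (fun x => `|f x|).
Proof.
rewrite !avgE normrM ger0_norm ?invr_ge0 ?ler0n //.
by apply: ler_wpM2l; [rewrite invr_ge0 ler0n | apply: ler_norm_sum].
Qed.

Lemma avg_const (T : finType) (c : C) : (0 < #|T|)%N -> avg (fun _ : T => c) = c.
Proof.
move=> h; rewrite avgE sumr_const -[c *+ _]mulr_natl mulrA mulVf ?mul1r //.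
by rewrite pnatr_eq0 -lt0n.
Qed.

Lemma conj_avg (T : finType) (f : T -> C) : (avg f)^* = avg (fun x => (f x)^*).
Proof. by rewrite !avgE rmorphM fmorphV rmorph_nat rmorph_sum. Qed.

Lemma avg_norm_le1 (T : finType) (f : T -> C) : (0 < #|T|)%N ->
  (forall x, `|f x| <= 1) -> `|avg f| <= 1.
Proof.
move=> h hf; apply: le_trans (norm_avg _) _.
by rewrite -(avg_const 1 h); apply: avg_le.
Qed.

Lemma jensen2 (T : finType) (a : T -> C) : (forall t, a t \is Num.real) ->
  (avg a) ^+ 2 <= avg (fun t => a t ^+ 2).
Proof.
move=> ra; rewrite !avgE.
have key : 0 <= \sum_s \sum_t (a s - a t) ^+ 2.
  apply: sumr_ge0 => s _; apply: sumr_ge0 => t _.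
  by rewrite -realEsqr rpredB.
have E : \sum_s \sum_t (a s - a t) ^+ 2 =
   2%:R * (#|T|%:R * \sum_s a s ^+ 2 - (\sum_s a s) ^+ 2).
  transitivity (\sum_s \sum_t (a s ^+ 2 + a t ^+ 2 - 2%:R * (a s * a t))).
    by apply: eq_bigr => s _; apply: eq_bigr => t _; ring.
  rewrite (eq_bigr (fun s => #|T|%:R * a s ^+ 2 + \sum_t a t ^+ 2
              - 2%:R * (a s * \sum_t a t))); last first.
    move=> s _; rewrite sumrB big_split /= sumr_const mulr_sumr mulr_sumr.
    by rewrite mulr_natl.
  rewrite big_split /= big_split /= sumrN sumr_const -mulr_sumr -mulr_sumr -mulr_suml.
  rewrite -[_ *+ #|_|]mulr_natl expr2; ring.
case: (posnP #|T|) => hT.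
  rewrite hT invr0 !mul0r expr2 mul0r //.
have hN : (#|T|%:R : C) != 0 by rewrite pnatr_eq0 -lt0n hT.
rewrite E in key.
have key2 : (\sum_s a s) ^+ 2 <= #|T|%:R * \sum_s a s ^+ 2.
  by rewrite -subr_ge0; rewrite pmulr_rge0 in key; [|by rewrite ltr0n].
rewrite exprMn; apply: (le_trans (ler_wpM2l _ key2)).
  by rewrite exprn_ge0 // invr_ge0 ler0n.
by rewrite expr2 -mulrA [X in _ * X]mulrA mulVf // mul1r.
Qed.

Lemma power_mean (T : finType) (a : T -> C) (m : nat) : (forall t, 0 <= a t) ->
  (avg a) ^+ (2 ^ m) <= avg (fun t => a t ^+ (2 ^ m)).
Proof.
elim: m a => [|m IH] a ha; first by rewrite expn0 !expr1; apply: avg_le.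
rewrite expnS exprM.
apply: le_trans (_ : (avg (fun t => a t ^+ 2)) ^+ (2 ^ m) <= _).
  apply: (@lerXn2r C (2 ^ m) (avg a ^+ 2) (avg (fun t => a t ^+ 2)));
    rewrite ?nnegrE ?exprn_ge0 ?avg_ge0 //.
    by move=> t; rewrite exprn_ge0.
  by apply: jensen2 => t; apply: ger0_real.
apply: le_trans (IH _ _) _; first by move=> t; rewrite exprn_ge0.
by apply: avg_le => t; rewrite exprM.
Qed.

End AvgLemmas.

Section Mix.
Variables (C : numClosedFieldType) (U : finType) (X : U -> finType).
Local Notation P := (XU X).

Definition mix (x0 x1 : P) (w : {set U}) : P :=
  [ffun u => if u \in w then x1 u else x0 u].

Lemma mixE x0 x1 w u : mix x0 x1 w u = if u \in w then x1 u else x0 u.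
Proof. by rewrite ffunE. Qed.

Lemma mix0 x0 x1 : mix x0 x1 set0 = x0.
Proof. by apply/ffunP => u; rewrite mixE inE. Qed.

Lemma mix_invol x0 x1 w : mix (mix x0 x1 w) (mix x1 x0 w) w = x0.
Proof. by apply/ffunP => u; rewrite !mixE; case: (u \in w). Qed.

Lemma sum_mix (h : P -> C) w :
  \sum_x \sum_p h (mix x p w) = #|P|%:R * \sum_x h x.
Proof.
rewrite pair_bigA /=.
pose s := fun q : P * P => (mix q.1 q.2 w, mix q.2 q.1 w).
have sK : cancel s s.
  by move=> [x p]; rewrite /s /= !mix_invol.
rewrite (reindex_inj (can_inj sK)) /=.
under eq_bigr do rewrite mix_invol.
rewrite -(pair_bigA _ (fun x (p : P) => h x)) /=.
rewrite mulr_sumr; apply: eq_bigr => x _; rewrite sumr_const.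
by rewrite mulr_natl.
Qed.

Lemma avg_mix (h : P -> C) w :
  avg (fun x => avg (fun p => h (mix x p w))) = avg h.
Proof.
rewrite !avgE (eq_bigr (fun x => #|P|%:R^-1 * \sum_p h (mix x p w))); last first.
  by move=> x _; rewrite avgE.
rewrite -mulr_sumr sum_mix mulrA.
case: (posnP #|P|) => hP; first by rewrite hP invr0 !mul0r.
by rewrite mulrA divfK // pnatr_eq0 -lt0n hP.
Qed.

Lemma mix_comm (x p q : P) (s v : U) : s != v ->
  mix (mix x q [set s]) p [set v] = mix (mix x p [set v]) q [set s].
Proof.
move=> sv; apply/ffunP => u; rewrite !mixE !inE.
case: (eqVneq u v) => [-> | nuv] /=; first by rewrite eq_sym (negPf sv).
by case: (u == s).
Qed.

Lemma mix_split1 (x0 x1 p p' : P) (w : {set U}) (v : U) : v \notin w ->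
  mix (mix x0 x1 w) p [set v] = mix (mix x0 p [set v]) (mix x1 p' [set v]) w.
Proof.
move=> vw; apply/ffunP => u; rewrite !mixE !inE.
by case: (eqVneq u v) => [->|_]; rewrite ?(negPf vw).
Qed.

Lemma mix_split2 (x0 x1 p p' : P) (w : {set U}) (v : U) : v \notin w ->
  mix (mix x0 x1 w) p' [set v] = mix (mix x0 p [set v]) (mix x1 p' [set v]) (v |: w).
Proof.
move=> vw; apply/ffunP => u; rewrite !mixE !inE.
by case: (eqVneq u v) => [->|_] //=; case: (u \in w).
Qed.

End Mix.

Section GCS.
Variables (C : numClosedFieldType) (U : finType) (X : U -> finType).
Local Notation P := (XU X).
Hypothesis hP : (0 < #|P|)%N.

Definition cj n (z : C) := iter n (fun z : C => z^*) z.

Lemma cjM n a b : cj n (a * b) = cj n a * cj n b.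
Proof. by elim: n => //= n IH; rewrite /cj /= -!/(cj _ _) IH rmorphM. Qed.

Lemma cjS n a : cj n.+1 a = cj n (a^*).
Proof. by rewrite /cj iterSr. Qed.

Definition Q (A : {set U}) (f : P -> C) : C :=
  avg (fun q : P * P => \prod_(w : {set U} | w \subset A) cj #|w| (f (mix q.1 q.2 w))).

Lemma prod_split (A : {set U}) (v : U) (F : {set U} -> C) : v \in A ->
  \prod_(w : {set U} | w \subset A) F w =
  \prod_(w : {set U} | w \subset A :\ v) (F w * F (v |: w)).
Proof.
move=> vA; rewrite big_split /= (bigID (fun w : {set U} => v \in w) _ F) /= mulrC; congr (_ * _).
  by apply: eq_bigl => w; rewrite subsetD1.
rewrite (reindex_onto (fun w => v |: w) (fun w => w :\ v)) /=; last first.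
  by move=> w /andP [_ vw]; rewrite setD1K.
apply: eq_bigl => w; rewrite subsetD1 setU11 andbT subUset sub1set vA /=.
case: (boolP (v \in w)) => vw; last by rewrite setU1K // eqxx.
rewrite andbF; apply/negbTE/negP => /andP [_ /eqP e].
by move: vw; rewrite -e !inE eqxx.
Qed.

Definition Fv (f : P -> C) (v : U) (pp : P * P) : P -> C :=
  fun x => f (mix x pp.1 [set v]) * (f (mix x pp.2 [set v]))^*.

Lemma Q_step (A : {set U}) (v : U) (f : P -> C) : v \in A ->
  Q A f = avg (fun pp : P * P => Q (A :\ v) (Fv f v pp)).
Proof.
move=> vA.
pose Pi := fun y0 y1 : P => \prod_(w : {set U} | w \subset A) cj #|w| (f (mix y0 y1 w)).
have E1 : forall pp q : P * P,
   \prod_(w : {set U} | w \subset A :\ v) cj #|w| (Fv f v pp (mix q.1 q.2 w)) =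
   Pi (mix q.1 pp.1 [set v]) (mix q.2 pp.2 [set v]).
  move=> pp q; rewrite /Pi (prod_split _ vA); apply: eq_bigr => w.
  rewrite subsetD1 => /andP [_ vw].
  rewrite /Fv cjM (mix_split1 _ _ _ pp.2 vw) (mix_split2 _ _ pp.1 _ vw).
  by rewrite cardsU1 vw add1n cjS.
rewrite /Q.
transitivity (avg (fun pp : P * P => avg (fun q : P * P =>
    Pi (mix q.1 pp.1 [set v]) (mix q.2 pp.2 [set v])))); last first.
  by apply: eq_avg => pp; apply: eq_avg => q; rewrite E1.
rewrite (avg_pair Pi).
rewrite (avg_pair (fun p p' => avg (fun q : P * P => Pi (mix q.1 p [set v]) (mix q.2 p' [set v])))).
transitivity (avg (fun p : P => avg (fun p' : P => avg (fun x0 : P => avg (fun x1 : P =>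
    Pi (mix x0 p [set v]) (mix x1 p' [set v])))))); last first.
  apply: eq_avg => p; apply: eq_avg => p'.
  by rewrite (avg_pair (fun x0 x1 => Pi (mix x0 p [set v]) (mix x1 p' [set v]))).
transitivity (avg (fun x0 : P => avg (fun p : P => avg (fun x1 : P => avg (fun p' : P =>
    Pi (mix x0 p [set v]) (mix x1 p' [set v])))))); last first.
  pose G := fun x0 p x1 p' : P => Pi (mix x0 p [set v]) (mix x1 p' [set v]).
  change (avg (fun x0 => avg (fun p => avg (fun x1 => avg (fun p' => G x0 p x1 p')))) =
          avg (fun p => avg (fun p' => avg (fun x0 => avg (fun x1 => G x0 p x1 p'))))).
  rewrite (avg_swap (fun x0 p => avg (fun x1 => avg (fun p' => G x0 p x1 p')))).
  apply: eq_avg => p.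
  rewrite (eq_avg (fun x0 => avg_swap (fun x1 p' => G x0 p x1 p'))).
  exact: (avg_swap (fun x0 p' => avg (fun x1 => G x0 p x1 p'))).
transitivity (avg (fun x0 : P => avg (fun p : P => avg (fun x1 : P =>
    Pi (mix x0 p [set v]) x1)))).
  by rewrite (avg_mix (fun y => avg (fun x1 => Pi y x1))).
apply: eq_avg => x0; apply: eq_avg => p.
by rewrite (avg_mix (fun y => Pi (mix x0 p [set v]) y)).
Qed.

Lemma Q0 (f : P -> C) : Q set0 f = avg f.
Proof.
rewrite /Q; transitivity (avg (fun q : P * P => f q.1)).
  apply: eq_avg => q.
  rewrite (eq_bigl (fun w => w == set0)) ?big_pred1_eq ?cards0 ?mix0 // => w.
  by rewrite subset0.
rewrite (avg_pair (fun x y => f x)); apply: eq_avg => x.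
by rewrite avg_const.
Qed.

Variable I : finType.

Definition gp (g : I -> P -> C) (sel : I -> U) (v : U) (pp : P * P) (i : I) (x : P) : C :=
  if sel i == v then 1 else g i (mix x pp.1 [set v]) * (g i (mix x pp.2 [set v]))^*.

Definition Tcs (f : P -> C) (g : I -> P -> C) (sel : I -> U) (v : U) : C :=
  avg (fun pp : P * P => avg (fun x => Fv f v pp x * \prod_i gp g sel v pp i x)).

Lemma cs_step (v : U) (f : P -> C) (g : I -> P -> C) (sel : I -> U) :
  (forall i x, `|g i x| <= 1) ->
  (forall i x q, sel i = v -> g i (mix x q [set v]) = g i x) ->
  0 <= Tcs f g sel v /\ `|avg (fun x => f x * \prod_i g i x)| ^+ 2 <= Tcs f g sel v.
Proof.
move=> g1 gind.
pose G2 := fun y => \prod_i (if sel i == v then 1 else g i y).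
pose B := fun x => \prod_i (if sel i == v then g i x else 1).
pose a := fun x p => f (mix x p [set v]) * G2 (mix x p [set v]).
pose h := fun x => avg (fun p => a x p).
have ET : avg (fun x => `|h x| ^+ 2) = Tcs f g sel v.
  rewrite /Tcs.
  transitivity (avg (fun x => avg (fun pp : P * P => Fv f v pp x * \prod_i gp g sel v pp i x)));
    last exact: (avg_swap (fun (x : P) (pp : P * P) => Fv f v pp x * \prod_i gp g sel v pp i x)).
  apply: eq_avg => x; rewrite normCK /h conj_avg mulrC avgMl.
  transitivity (avg (fun pp : P * P => a x pp.1 * (a x pp.2)^*)); last first.
    apply: eq_avg => -[p p'] /=.
    rewrite /a /Fv /G2 rmorphM rmorph_prod /= mulrACA; congr (_ * _).
    rewrite -big_split /=; apply: eq_bigr => i _; rewrite /gp.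
    by case: (sel i == v); rewrite ?rmorph1 ?mulr1.
  rewrite (avg_pair (fun p p' => a x p * (a x p')^*)).
  by apply: eq_avg => p; rewrite mulrC avgMl.
have EL : avg (fun x => f x * \prod_i g i x) = avg (fun x => B x * h x).
  rewrite -(avg_mix (fun y => f y * \prod_i g i y) [set v]); apply: eq_avg => x.
  rewrite /h avgMl; apply: eq_avg => p.
  have -> : \prod_i g i (mix x p [set v]) = B x * G2 (mix x p [set v]).
    rewrite /B /G2 -big_split /=; apply: eq_bigr => i _.
    case: (eqVneq (sel i) v) => [e|_]; first by rewrite (gind _ _ _ e) mulr1.
    by rewrite mul1r.
  by rewrite /a mulrCA.
have hB : forall x, `|B x| <= 1.
  move=> x; rewrite /B normr_prod; apply: prodr_ile1 => i _.
  by case: (sel i == v); rewrite ?normr1 ?lexx ?ler01 ?normr_ge0 ?g1.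
rewrite -ET; split; first by apply: avg_ge0 => x; rewrite exprn_ge0.
rewrite EL.
have H1 : `|avg (fun x => B x * h x)| <= avg (fun x => `|h x|).
  apply: le_trans (norm_avg _) _; apply: avg_le => x.
  by rewrite normrM ler_piMl.
apply: le_trans (_ : (avg (fun x => `|h x|)) ^+ 2 <= _).
  apply: lerXn2r; rewrite ?nnegrE ?normr_ge0 //.
  by apply: avg_ge0 => x.
by apply: jensen2 => x; apply: normr_real.
Qed.

Lemma gcs (n : nat) : forall (A : {set U}) (f : P -> C) (g : I -> P -> C) (sel : I -> U),
  #|A| = n.+1 -> (forall i, sel i \in A) -> (forall i x, `|g i x| <= 1) ->
  (forall i x q, g i (mix x q [set sel i]) = g i x) ->
  `|avg (fun x => f x * \prod_i g i x)| ^+ (2 ^ n.+1) <= Q A f.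
Proof.
elim: n => [|n IH] A f g sel cA selA g1 gind.
  have /card_gt0P [v vA] : (0 < #|A|)%N by rewrite cA.
  have gind' : forall i x q, sel i = v -> g i (mix x q [set v]) = g i x.
    by move=> i x q e; rewrite -e gind.
  have [T0 Tle] := cs_step f g1 gind'.
  have /cards1P [u Au] : #|A| == 1%N by rewrite cA.
  have sv : forall i, sel i = v.
    have vu : v = u by move: vA; rewrite Au => /set1P.
    by move=> i; move: (selA i); rewrite Au -vu => /set1P.
  rewrite (Q_step _ vA) expn1; apply: le_trans Tle _; rewrite /Tcs le_eqVlt; apply/orP; left.
  apply/eqP; apply: eq_avg => pp.
  have -> : A :\ v = set0.
    by move: vA; rewrite Au => /set1P ->; rewrite setDv.
  rewrite Q0; apply: eq_avg => x.
  by rewrite big1 ?mulr1 // => i _; rewrite /gp sv eqxx.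
have /card_gt0P [v vA] : (0 < #|A|)%N by rewrite cA.
have gind' : forall i x q, sel i = v -> g i (mix x q [set v]) = g i x.
  by move=> i x q e; rewrite -e gind.
have [T0 Tle] := cs_step f g1 gind'.
have cAv : #|A :\ v| = n.+1.
  by move: cA; rewrite (cardsD1 v A) vA add1n => -[].
have /card_gt0P [v' v'A] : (0 < #|A :\ v|)%N by rewrite cAv.
pose sel' := fun i => if sel i == v then v' else sel i.
rewrite (Q_step _ vA) expnS exprM.
apply: le_trans (_ : Tcs f g sel v ^+ (2 ^ n.+1) <= _).
  by apply: lerXn2r; rewrite ?nnegrE ?exprn_ge0 ?normr_ge0.
pose b := fun pp : P * P => `|avg (fun x => Fv f v pp x * \prod_i gp g sel v pp i x)|.
apply: le_trans (_ : (avg b) ^+ (2 ^ n.+1) <= _).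
  apply: lerXn2r; rewrite ?nnegrE //; first by apply: avg_ge0 => pp; rewrite normr_ge0.
  apply: le_trans (real_ler_norm (ger0_real T0)) _.
  exact: norm_avg.
apply: le_trans (power_mean (n.+1) _) _; first by move=> pp; rewrite /b normr_ge0.
apply: avg_le => pp; rewrite /b.
apply: (IH _ _ _ sel') => //.
- move=> i; rewrite /sel'; case: eqVneq => [//|ne].
  by rewrite !inE ne selA.
- move=> i x; rewrite /gp; case: ifP => _; first by rewrite normr1.
  by rewrite normrM norm_conjC mulr_ile1 ?normr_ge0 ?g1.
- move=> i x q; rewrite /gp; case: eqVneq => [//|ne].
  rewrite /sel' (negPf ne) (mix_comm x pp.1 q ne) (mix_comm x pp.2 q ne).
  by rewrite !gind.
Qed.

End GCS.

Section Restr.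
Variables (C : numClosedFieldType) (U : finType) (X : U -> finType).
Local Notation P := (XU X).

Definition ext (V : {set U}) (x : P) (y : XV X V) : P :=
  [ffun u => match decP (@idP (u \in V)) with
             | left h => y (exist (fun u => u \in V) u h)
             | right _ => x u end].

Lemma restr_ext V x y : restr V (ext x y) = y.
Proof.
apply/ffunP => -[u hu]; rewrite !ffunE /=.
case: (decP idP) => h; first by rewrite (bool_irrelevance h hu).
by case: h.
Qed.

Lemma ext_restr V (x x' : P) : ext x' (restr V x) = mix x' x V.
Proof.
apply/ffunP => u; rewrite !ffunE /=.
case: (decP idP) => h; rewrite ?ffunE /=; first by rewrite h.
by move/negP/negbTE: h => ->.
Qed.

Lemma ext_out (V : {set U}) (x : P) (y : XV X V) (u : U) : u \notin V -> ext x y u = x u.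
Proof.
move=> uV; rewrite ffunE; case: (decP idP) => h //.
by move: uV; rewrite h.
Qed.

Lemma avg_restr (V : {set U}) (h : XV X V -> C) : (0 < #|P|)%N ->
  avg (fun x : P => h (restr V x)) = avg h.
Proof.
move=> hP.
have hV : (0 < #|XV X V|)%N.
  by have /card_gt0P [x _] := hP; apply/card_gt0P; exists (restr V x).
pose s := fun q : P * XV X V => (ext q.1 q.2, restr V q.1).
have sK : cancel s s.
  move=> [x y]; rewrite /s /= restr_ext ext_restr; congr (_, _).
  apply/ffunP => u; rewrite mixE; case: ifP => // /negbT uV.
  by rewrite ext_out.
have E : \sum_(q : P * XV X V) h (restr V q.1) = \sum_(q : P * XV X V) h q.2.
  by rewrite (reindex_inj (can_inj sK)) /=; apply: eq_bigr => q _; rewrite restr_ext.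
have E1 : \sum_(q : P * XV X V) h (restr V q.1) = #|XV X V|%:R * \sum_x h (restr V x).
  transitivity (\sum_(x : P) \sum_(y : XV X V) h (restr V x)); first by rewrite pair_bigA.
  by rewrite mulr_sumr; apply: eq_bigr => x _; rewrite sumr_const mulr_natl.
have E2 : \sum_(q : P * XV X V) h q.2 = #|P|%:R * \sum_y h y.
  transitivity (\sum_(x : P) \sum_(y : XV X V) h y); first by rewrite pair_bigA.
  by rewrite sumr_const mulr_natl.
rewrite E1 E2 in E.
rewrite !avgE.
have nP : (#|P|%:R : C) != 0 by rewrite pnatr_eq0 -lt0n.
have nV : (#|XV X V|%:R : C) != 0 by rewrite pnatr_eq0 -lt0n.
apply: (mulfI nV); rewrite mulrCA E mulKf // mulrA divff // mul1r.
by apply: eq_bigr.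
Qed.

Lemma Q_restr (V : {set U}) (f : XV X V -> C) : (0 < #|P|)%N ->
  Q V (fun x => f (restr V x)) = boxpow f.
Proof.
move=> hP.
pose phi := fun w' : {ffun subidx V -> bool} => val @: [set i | w' i].
pose psi := fun w : {set U} => [ffun i : subidx V => val i \in w].
have phiV : forall w', phi w' \subset V.
  by move=> w'; apply/subsetP => u /imsetP [i _ ->]; exact: (valP i).
have psiK : forall w', psi (phi w') = w'.
  by move=> w'; apply/ffunP => i; rewrite ffunE (mem_imset _ _ val_inj) inE.
have phiK : forall w : {set U}, w \subset V -> phi (psi w) = w.
  move=> w wV; apply/setP => u; apply/imsetP/idP => [[i] | uw].
    by rewrite inE ffunE => ? ->.
  have uV : u \in V by apply: (subsetP wV).
  by exists (exist (fun u => u \in V) u uV); rewrite // inE ffunE.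
pose H := fun y0 y1 : XV X V => \prod_(w : {ffun subidx V -> bool})
            iter #|[set i | w i]| (fun z : C => z^*) (f (xomega y0 y1 w)).
transitivity (avg (fun q : P * P => H (restr V q.1) (restr V q.2))).
  rewrite /Q; apply: eq_avg => q.
  rewrite (reindex phi) /=; last first.
    by exists psi => [w' _ | w]; rewrite ?psiK // inE => /phiK.
  rewrite (eq_bigl xpredT); last by move=> w'; rewrite phiV.
  apply: eq_bigr => w' _; rewrite /cj (card_imset _ val_inj); congr (iter _ _ (f _)).
  apply/ffunP => i; rewrite !ffunE (mem_imset _ _ val_inj) inE.
  by case: (w' i).
rewrite (avg_pair (fun x0 x1 => H (restr V x0) (restr V x1))).
transitivity (avg (fun x0 : P => avg (fun y1 : XV X V => H (restr V x0) y1))).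
  by apply: eq_avg => x0; rewrite (avg_restr (fun y1 => H (restr V x0) y1)).
rewrite (avg_restr (fun y0 => avg (fun y1 : XV X V => H y0 y1))) //.
by rewrite -(avg_pair H).
Qed.

End Restr.

Lemma bigmax_ub (C : numClosedFieldType) (T : eqType) (r : seq T) (Pr : pred T) (F : T -> C) :
  (forall i, 0 <= F i) ->
  0 <= \big[Num.max/0]_(i <- r | Pr i) F i /\
  forall j, j \in r -> Pr j -> F j <= \big[Num.max/0]_(i <- r | Pr i) F i.
Proof.
move=> F0; elim: r => [|a r [IH0 IH]]; first by rewrite big_nil lexx.
rewrite big_cons; case: ifP => Pa.
  have cmp : F a >=< \big[Num.max/0]_(i <- r | Pr i) F i.
    by apply: real_comparable; apply: ger0_real.
  split; first by rewrite comparable_le_max // F0.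
  move=> j; rewrite in_cons => /orP [/eqP -> _|jr Pj].
    by rewrite comparable_le_max // lexx.
  by rewrite comparable_le_max // IH // orbT.
split=> // j; rewrite in_cons => /orP [/eqP -> |jr Pj]; first by rewrite Pa.
exact: IH.
Qed.

Section Main.
Variables (C : numClosedFieldType) (U : finType) (X : U -> finType).
Hypothesis hX : forall u : U, (0 < #|X u|)%N.
Local Notation P := (XU X).

Lemma P_pos : (0 < #|P|)%N.
Proof.
apply/card_gt0P.
by exists (finfun (fun u => xchoose (elimT card_gt0P (hX u))) : P).
Qed.

Lemma XV_pos (V : {set U}) : (0 < #|XV X V|)%N.
Proof. by have /card_gt0P [x _] := P_pos; apply/card_gt0P; exists (restr V x). Qed.

Lemma boxpow_ge0 (V : {set U}) (f : XV X V -> C) : V != set0 -> 0 <= boxpow f.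
Proof.
move=> hV; have /set0Pn [v vV] := hV.
have cV : #|V| = (#|V|.-1).+1 by rewrite prednK // card_gt0.
have g1 : forall (i : 'I_0) (x : P), `|(fun _ _ => 1 : C) i x| <= 1.
  by move=> *; rewrite normr1.
have H := @gcs C U X P_pos 'I_0 (#|V|.-1) V (fun x => f (restr V x))
   (fun _ _ => 1) (fun _ => v) cV (fun _ => vV) g1 (fun _ _ _ => erefl).
rewrite -cV Q_restr in H; last exact: P_pos.
exact: le_trans (exprn_ge0 _ (normr_ge0 _)) H.
Qed.

Lemma boxnorm_ge0 (V : {set U}) (f : XV X V -> C) : 0 <= boxnorm f.
Proof.
rewrite /boxnorm; case: ifP => h; first exact: normr_ge0.
by rewrite rootC_ge0 ?expn_gt0 // boxpow_ge0 // h.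
Qed.

Lemma gcs_final (V : {set U}) (f : XV X V -> C) (I : finType) (g : I -> P -> C) (sel : I -> U) :
  V != set0 -> (forall i, sel i \in V) -> (forall i x, `|g i x| <= 1) ->
  (forall i x q, g i (mix x q [set sel i]) = g i x) ->
  `|avg (fun x => f (restr V x) * \prod_i g i x)| <= boxnorm f.
Proof.
move=> hV selA g1 gind.
have cV : #|V| = (#|V|.-1).+1 by rewrite prednK // card_gt0.
have H := @gcs C U X P_pos I (#|V|.-1) V (fun x => f (restr V x)) g sel cV selA g1 gind.
rewrite -cV Q_restr in H; last exact: P_pos.
have N0 : (0 < 2 ^ #|V|)%N by rewrite expn_gt0.
rewrite /boxnorm (negbTE hV) -(exprCK N0 (normr_ge0 _)).
by rewrite (ler_rootC N0) ?nnegrE ?exprn_ge0 ?normr_ge0 ?boxpow_ge0.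
Qed.

Variable S : forall V : {set U}, {set XV X V}.

Definition ind (V : {set U}) (x : P) : C := ((restr V x \in S V)%:R : C).
Definition dl (V : {set U}) : C := avg (fun y : XV X V => ((y \in S V)%:R : C)).
Definition fv (V : {set U}) (y : XV X V) : C := ((y \in S V)%:R : C) - dl V.
Arguments fv V y : clear implicits.
Definition bn (V : {set U}) : C := boxnorm (fv V).
Definition Rc (A B : {set U}) : bool := (#|B| <= #|A|)%N.

Lemma ind_le1 (V : {set U}) (x : P) : `|ind V x| <= 1.
Proof. by rewrite /ind; case: (_ \in _); rewrite ?normr1 ?normr0 ?ler01 ?lexx. Qed.

Lemma dl_le1 (V : {set U}) : `|dl V| <= 1.
Proof.
apply: avg_norm_le1; first exact: XV_pos.
by move=> y; case: (_ \in _); rewrite ?normr1 ?normr0 ?ler01 ?lexx.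
Qed.

Lemma term_bound (V : {set U}) (L : seq {set U}) :
  V \notin L -> all (Rc V) L ->
  `|avg (fun x => fv V (restr V x) * \prod_(W <- L) ind W x)| <= bn V.
Proof.
move=> VL allR.
case: (eqVneq V set0) => [V0 | hV].
  have f0 : forall y, fv V y = 0.
    move=> y; rewrite /fv /dl.
    have -> : avg (fun z : XV X V => ((z \in S V)%:R : C)) = avg (fun _ : XV X V => ((y \in S V)%:R : C)).
      apply: eq_avg => z; have -> // : z = y.
      by apply/ffunP => -[u hu]; exfalso; move: hu; rewrite V0 inE.
    by rewrite avg_const ?subrr // XV_pos.
  rewrite (eq_avg (g := fun _ => 0)); last by move=> x; rewrite f0 mul0r.
  by rewrite avg_const ?normr0 ?boxnorm_ge0 // P_pos.
have /set0Pn [v0 v0V] := hV.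
pose n := size L.
pose g := fun (i : 'I_n) (x : P) => ind (nth set0 L i) x.
pose sel := fun i : 'I_n => odflt v0 [pick v in V :\: nth set0 L i].
have selP : forall i : 'I_n, sel i \in V /\ sel i \notin nth set0 L i.
  move=> i; have WL : nth set0 L i \in L by rewrite mem_nth.
  have nVW : ~~ (V \subset nth set0 L i).
    apply/negP => sub.
    have : V == nth set0 L i by rewrite eqEcard sub; move/allP: allR => /(_ _ WL).
    by move/eqP => e; move: VL; rewrite e WL.
  rewrite /sel; case: pickP => [v | none] /=.
    by rewrite inE => /andP [].
  by move/subsetPn: nVW => [v vV vW]; move: (none v); rewrite inE vW vV.
have -> : avg (fun x => fv V (restr V x) * \prod_(W <- L) ind W x) =
          avg (fun x => fv V (restr V x) * \prod_i g i x).
  apply: eq_avg => x; congr (_ * _).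
  by rewrite (big_nth set0) big_mkord.
apply: (@gcs_final V _ _ g sel) => //.
- by move=> i; case: (selP i).
- by move=> i x; apply: ind_le1.
- move=> i x q; rewrite /g /ind.
  have -> // : restr (nth set0 L i) (mix x q [set sel i]) = restr (nth set0 L i) x.
  apply/ffunP => j; rewrite !ffunE inE.
  case: (eqVneq (val j) (sel i)) => [e|//].
  by case: (selP i) => _; rewrite -e (valP j).
Qed.

Lemma Rc_trans : transitive Rc.
Proof. by move=> B A D; rewrite /Rc => h1 h2; apply: leq_trans h2 h1. Qed.

Lemma telescope (L : seq {set U}) : uniq L -> sorted Rc L ->
  `|avg (fun x => \prod_(V <- L) ind V x) - \prod_(V <- L) dl V| <= \sum_(V <- L) bn V.
Proof.
elim: L => [|V L IH] /=.
  move=> _ _; rewrite (eq_avg (g := fun _ => 1)); last by move=> x; rewrite big_nil.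
  by rewrite !big_nil avg_const ?P_pos // subrr normr0 lexx.
move=> /andP [VL uL] sL.
have sL' := path_sorted sL.
have allR := order_path_min Rc_trans sL.
rewrite (eq_avg (g := fun x => ind V x * \prod_(j <- L) ind j x)); last first.
  by move=> x; rewrite big_cons.
rewrite !big_cons.
have -> : avg (fun x => ind V x * \prod_(j <- L) ind j x) - dl V * \prod_(j <- L) dl j =
   avg (fun x => fv V (restr V x) * \prod_(W <- L) ind W x) +
   dl V * (avg (fun x => \prod_(W <- L) ind W x) - \prod_(W <- L) dl W).
  rewrite mulrBr avgMl addrA avgD; congr (_ - _); apply: eq_avg => x.
  by rewrite /fv -mulrDl subrK.
apply: le_trans (ler_normD _ _) _; apply: lerD; first exact: term_bound.
rewrite normrM; apply: le_trans (IH uL sL'); apply: ler_piMl; first exact: normr_ge0.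
exact: dl_le1.
Qed.

End Main.

Lemma sum_le_size (C : numClosedFieldType) (T : eqType) (L : seq T) (b : T -> C) (M : C) :
  (forall V, V \in L -> b V <= M) -> \sum_(V <- L) b V <= (size L)%:R * M.
Proof.
elim: L => [|a L IH] h; first by rewrite big_nil mul0r.
rewrite big_cons /= -addn1 natrD mulrDl mul1r addrC; apply: lerD.
  by apply: IH => V VL; apply: h; rewrite in_cons VL orbT.
by apply: h; rewrite in_cons eqxx.
Qed.

Unset Implicit Arguments.

Theorem lemma4p6 (C : numClosedFieldType) (U : finType) (X : U -> finType)
  (hX : forall u : U, (0 < #|X u|)%N)
  (S : forall V : {set U}, {set XV X V})
  (k : int) (hk : k <= (#|U|)%:Z) :
  `| avg (fun x : XU X =>
          \prod_(V : {set U} | (#|V|)%:Z <= k) ((restr V x \in S V)%:R : C))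
     - \prod_(V : {set U} | (#|V|)%:Z <= k)
          avg (fun y : XV X V => ((y \in S V)%:R : C)) |
  <= 2 ^+ #|U| *
     \big[Num.max/0]_(V : {set U} | (#|V|)%:Z <= k)
        boxnorm (fun y : XV X V =>
                   ((y \in S V)%:R : C) - avg (fun z : XV X V => ((z \in S V)%:R : C))).
Proof.
pose Pk := fun V : {set U} => (#|V|)%:Z <= k.
pose L := sort (@Rc U) [seq V <- index_enum {set U} | Pk V].
have conv : forall F : {set U} -> C, \prod_(V : {set U} | Pk V) F V = \prod_(V <- L) F V.
  move=> F.
  transitivity (\prod_(V <- [seq V <- index_enum {set U} | Pk V]) F V); first by rewrite big_filter.
  by apply: perm_big; rewrite perm_sym /L perm_sort perm_refl.
have uL : uniq L by rewrite /L sort_uniq filter_uniq // index_enum_uniq.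
have sL : sorted (@Rc U) L.
  apply: sort_sorted => A B; rewrite /Rc; exact: leq_total.
have H := @telescope C U X hX S L uL sL.
rewrite (eq_avg (g := fun x => \prod_(V <- L) ind C S V x)); last first.
  by move=> x; rewrite (conv (fun V => ind C S V x)).
rewrite (conv (fun V => dl C S V)).
apply: le_trans H _.
set M := \big[Num.max/0]_(V : {set U} | Pk V) _.
have bn0 : forall V, 0 <= bn C S V by move=> V; apply: boxnorm_ge0.
have [M0 Mub] := @bigmax_ub C _ (index_enum {set U}) Pk (fun V => bn C S V) bn0.
apply: le_trans (sum_le_size (M := M) _) _.
  move=> V; rewrite /L mem_sort mem_filter => /andP [PV _].
  by apply: Mub => //; rewrite mem_index_enum.
apply: ler_wpM2r => //.
rewrite -natrX ler_nat size_sort.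
rewrite size_filter; apply: leq_trans (count_size _ _) _.
have -> : index_enum {set U} = Finite.enum _ by rewrite /index_enum unlock.
rewrite -enumT -cardT -cardsT.
have -> : [set: {set U}] = powerset [set: U].
  by apply/setP => A; rewrite powersetE subsetT inE.
by rewrite card_powerset cardsT.
Qed.
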